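(* Let $I\subset\mathbb{R}$ be an interval, $\psi:I\to\mathbb{R}$ a non-decreasing convex function, $n\ge2$, $a=(a_1,\dots,a_n)\in I^n$ a relative convex sequence, and $t=(t_1,\dots,t_n)\in T_a$. Let $p=(p_1,\dots,p_n)\in[0,\infty)^n$ with $P_n=\sum p_i>0$ and assume $M_{n,p}(t)<t_n$ (i.e. $p_i>0$ for some $i<n$). Put $$m=\lfloor M_{n,p}(t)\rfloor_t,\quad \gamma_t=\frac{M_{n,p}(t)-t_m}{t_{m+1}-t_m},\quad \lambda_t=\frac{t_n-M_{n,p}(t)}{t_n-t_1}.$$ Then $$\gamma_t\,\psi(a_{m+1})+(1-\gamma_t)\,\psi(a_m)\le\frac1{P_n}\sum_{i=1}^n p_i\psi(a_i)\le \lambda_t\,\psi(a_1)+(1-\lambda_t)\,\psi(a_n).$$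
   Context: For a real sequence $(x_i)$, $\Delta x_i=x_{i+1}-x_i$. ''Increasing'' means strictly increasing. For a real sequence $a=(a_i)_{i=1}^n$, $T_a$ denotes the set of increasing real sequences $(t_i)_{i=1}^n$ such that $(\Delta a_i/\Delta t_i)_{i=1}^{n-1}$ is non-decreasing; $a$ is relative convex if $T_a\ne\emptyset$. $M_{n,p}(t)=\frac1{P_n}\sum_{i=1}^n p_it_i$. For an increasing sequence $t=(t_1,\dots,t_n)$ and $q\in[t_1,t_n]$, $\lfloor q\rfloor_t$ denotes the index $i$ of the largest $t_i$ with $t_i\le q$. *)

(* Defs.v *)
(* Sequences x = (x_1,...,x_n) are functions nat -> R,
   only the values at indices 1..n matter. *)
From mathcomp Require Import all_boot all_order all_algebra.
Set Implicit Arguments. Unset Strict Implicit. Unset Printing Implicit Defensive.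
Import Order.TTheory GRing.Theory Num.Theory.
Local Open Scope ring_scope.

Section Defs.
Variable R : realFieldType.

Definition convex_on (I : interval R) (psi : R -> R) : Prop :=
  forall x y l, x \in I -> y \in I -> 0 <= l -> l <= 1 ->
    psi (l * x + (1 - l) * y) <= l * psi x + (1 - l) * psi y.

Definition nondecr_on (I : interval R) (psi : R -> R) : Prop :=
  forall x y, x \in I -> y \in I -> x <= y -> psi x <= psi y.

Definition Delta (x : nat -> R) (i : nat) : R := x i.+1 - x i.

Definition increasing_seq (n : nat) (t : nat -> R) : Prop :=
  forall i, (1 <= i)%N -> (i < n)%N -> t i < t i.+1.

Definition in_T (n : nat) (a t : nat -> R) : Prop :=
  increasing_seq n t /\
  forall i, (1 <= i)%N -> (i.+1 < n)%N ->
    Delta a i / Delta t i <= Delta a i.+1 / Delta t i.+1.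

Definition relative_convex (n : nat) (a : nat -> R) : Prop :=
  exists t, in_T n a t.

Definition Psum (n : nat) (p : nat -> R) : R := \sum_(1 <= i < n.+1) p i.

Definition Mnp (n : nat) (p t : nat -> R) : R :=
  (Psum n p)^-1 * \sum_(1 <= i < n.+1) p i * t i.

Definition floor_idx (n : nat) (t : nat -> R) (q : R) : nat :=
  \max_(1 <= i < n.+1 | t i <= q) i.

End Defs.

(* Main.v *)
Require Import Defs.
From mathcomp Require Import all_boot all_order all_algebra.
From mathcomp Require Import ring lra zify.
Import Order.TTheory GRing.Theory Num.Theory.
Set Implicit Arguments. Unset Strict Implicit. Unset Printing Implicit Defensive.
Local Open Scope ring_scope.

Lemma itv_conv (R : realFieldType) (I : interval R) x z c :
  x \in I -> z \in I -> x <= c -> c <= z -> c \in I.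
Proof.
case: I => bl br; rewrite !itv_boundlr => /andP[hx1 hx2] /andP[hz1 hz2] hxc hcz.
apply/andP; split.
  by apply: (le_trans hx1); rewrite bnd_simp.
by apply: le_trans hz2; rewrite bnd_simp.
Qed.

Definition slope (R : realFieldType) (b t : nat -> R) k := Delta b k / Delta t k.

Lemma slope_mul (R : realFieldType) (b t : nat -> R) k :
  0 < Delta t k -> slope b t k * Delta t k = Delta b k.
Proof. by move=> h; rewrite /slope divfK // gt_eqF. Qed.

Lemma lemA (R : realFieldType) (n : nat) (b t : nat -> R) d j :
  increasing_seq n t -> (1 <= j)%N ->
  forall i, (j <= i <= n)%N -> (forall k, (j <= k < i)%N -> slope b t k <= d) ->
  b i - b j <= d * (t i - t j).
Proof.
move=> inc j1; elim=> [|i IH].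
  move=> /andP[h _]; have -> : j = 0%N by lia. by rewrite !subrr mulr0.
move=> /andP[ji ilen] hk.
have [->|ji'] := eqVneq j i.+1; first by rewrite !subrr mulr0.
have h1 : (j <= i <= n)%N by lia.
have := IH h1 (fun k hk' => hk k ltac:(lia)).
have ht : 0 < Delta t i by rewrite /Delta subr_gt0; apply: inc; lia.
have hs := slope_mul b ht.
have hd := hk i ltac:(lia).
move: hs; rewrite /Delta => hs.
have : slope b t i * (t i.+1 - t i) <= d * (t i.+1 - t i).
  by apply: ler_wpM2r => //; apply: ltW.
move: ht; rewrite /Delta. nra.
Qed.

Lemma lemB (R : realFieldType) (n : nat) (b t : nat -> R) d j :
  increasing_seq n t -> (1 <= j)%N ->
  forall i, (j <= i <= n)%N -> (forall k, (j <= k < i)%N -> d <= slope b t k) ->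
  d * (t i - t j) <= b i - b j.
Proof.
move=> inc j1; elim=> [|i IH].
  move=> /andP[h _]; have -> : j = 0%N by lia. by rewrite !subrr mulr0.
move=> /andP[ji ilen] hk.
have [->|ji'] := eqVneq j i.+1; first by rewrite !subrr mulr0.
have h1 : (j <= i <= n)%N by lia.
have := IH h1 (fun k hk' => hk k ltac:(lia)).
have ht : 0 < Delta t i by rewrite /Delta subr_gt0; apply: inc; lia.
have hs := slope_mul b ht.
have hd := hk i ltac:(lia).
move: hs; rewrite /Delta => hs.
have : d * (t i.+1 - t i) <= slope b t i * (t i.+1 - t i).
  by apply: ler_wpM2r => //; apply: ltW.
move: ht; rewrite /Delta. nra.
Qed.

Lemma support (R : realFieldType) (n : nat) (b t : nat -> R) d i :
  increasing_seq n t -> (1 <= i <= n)%N ->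
  (forall k, (1 <= k)%N -> (k < n)%N -> (k < i)%N -> slope b t k <= d) ->
  (forall k, (1 <= k)%N -> (k < n)%N -> (i <= k)%N -> d <= slope b t k) ->
  forall j, (1 <= j <= n)%N -> b i + d * (t j - t i) <= b j.
Proof.
move=> inc /andP[i1 iN] hl hg j /andP[j1 jN].
have [ij|ji] := leqP i j.
  have := lemB inc i1 (i:=j) ltac:(lia) (fun k hk => hg k ltac:(lia) ltac:(lia) ltac:(lia)).
  lra.
have := lemA inc j1 (i:=i) ltac:(lia) (fun k hk => hl k ltac:(lia) ltac:(lia) ltac:(lia)).
lra.
Qed.
Lemma slope_mono (R : realFieldType) (n : nat) (b t : nat -> R) :
  (forall k, (1 <= k)%N -> (k.+1 < n)%N -> slope b t k <= slope b t k.+1) ->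
  forall j k, (1 <= j)%N -> (j <= k)%N -> (k < n)%N -> slope b t j <= slope b t k.
Proof.
move=> h j; elim=> [|k IH] j1 jk kn; first by have -> : j = 0%N by lia.
have [->|ne] := eqVneq j k.+1; first by [].
apply: le_trans (IH j1 ltac:(lia) ltac:(lia)) (h k ltac:(lia) ltac:(lia)).
Qed.

Lemma b_local (R : realFieldType) (I : interval R) (psi : R -> R) (n : nat) (a t : nat -> R) :
  nondecr_on I psi -> convex_on I psi ->
  (forall i, (1 <= i <= n)%N -> a i \in I) -> in_T n a t ->
  forall k, (1 <= k)%N -> (k.+1 < n)%N ->
  slope (fun i => psi (a i)) t k <= slope (fun i => psi (a i)) t k.+1.
Proof.
move=> hnd hcv hI [inc hsl] k k1 kn.
have h1 : 0 < t k.+1 - t k by rewrite subr_gt0; apply: inc; lia.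
have h2 : 0 < t k.+2 - t k.+1 by rewrite subr_gt0; apply: inc; lia.
have := hsl k k1 kn; rewrite /slope /Delta.
set x := a k; set y := a k.+1; set z := a k.+2.
set H1 := t k.+1 - t k; set H2 := t k.+2 - t k.+1.
move=> H.
have H' : H2 * (y - x) <= H1 * (z - y).
  move: H; rewrite ler_pdivlMr // mulrAC ler_pdivrMr // => H.
  by rewrite mulrC [H1 * _]mulrC.
have hs : 0 < H1 + H2 by rewrite addr_gt0.
set mu := H2 / (H1 + H2).
have mu0 : 0 <= mu by rewrite /mu divr_ge0 // ltW.
have mu1 : mu <= 1 by rewrite /mu ler_pdivrMr // mul1r lerDr ltW.
have hx : x \in I := hI k ltac:(lia).
have hy : y \in I := hI k.+1 ltac:(lia).
have hz : z \in I := hI k.+2 ltac:(lia).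
clearbody x y z.
set c := mu * x + (1 - mu) * z.
have ec : c = (H2 * x + H1 * z) / (H1 + H2).
  rewrite /c /mu; field; by rewrite gt_eqF.
have cI : c \in I.
  have [xz|zx] := lerP x z.
    have e1 : 0 <= mu * (z - x) by rewrite mulr_ge0 // subr_ge0.
    have e2 : 0 <= (1 - mu) * (z - x) by rewrite mulr_ge0 // subr_ge0.
    apply: (itv_conv hx hz); rewrite /c; lra.
  have e1 : 0 <= mu * (x - z) by apply: mulr_ge0 => //; rewrite subr_ge0 //; apply: ltW.
  have e2 : 0 <= (1 - mu) * (x - z) by apply: mulr_ge0 => //; rewrite subr_ge0 //; apply: ltW.
  apply: (itv_conv hz hx); rewrite /c; lra.
have yc : y <= c by rewrite ec ler_pdivlMr //; lra.
have := le_trans (hnd _ _ hy cI yc) (hcv _ _ mu hx hz mu0 mu1).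
have -> : mu * psi x + (1 - mu) * psi z = (H2 * psi x + H1 * psi z) / (H1 + H2).
  rewrite /mu; field; by rewrite gt_eqF.
rewrite ler_pdivlMr // => K.
rewrite ler_pdivlMr // mulrAC ler_pdivrMr //.
nra.
Qed.

Lemma avg_lb (R : realFieldType) (n : nat) (b t p : nat -> R) al be :
  (forall i, (1 <= i <= n)%N -> 0 <= p i) -> 0 < Psum n p ->
  (forall i, (1 <= i <= n)%N -> al + be * t i <= b i) ->
  al + be * Mnp n p t <= (Psum n p)^-1 * \sum_(1 <= i < n.+1) p i * b i.
Proof.
move=> hp hP hb.
have S : \sum_(1 <= i < n.+1) p i * (al + be * t i) <= \sum_(1 <= i < n.+1) p i * b i.
  apply: ler_sum_nat => i hi; apply: ler_wpM2l; [apply: hp | apply: hb]; lia.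
have E : \sum_(1 <= i < n.+1) p i * (al + be * t i) =
   al * Psum n p + be * \sum_(1 <= i < n.+1) p i * t i.
  rewrite /Psum !mulr_sumr -big_split; apply: eq_bigr => i _ /=; ring.
rewrite E in S.
have hPi : 0 <= (Psum n p)^-1 by rewrite invr_ge0 ltW.
have := ler_wpM2l hPi S.
have -> : (Psum n p)^-1 * (al * Psum n p + be * \sum_(1 <= i < n.+1) p i * t i)
   = al + be * Mnp n p t.
  rewrite /Mnp; field; by rewrite gt_eqF.
by [].
Qed.

Lemma avg_ub (R : realFieldType) (n : nat) (b t p : nat -> R) al be :
  (forall i, (1 <= i <= n)%N -> 0 <= p i) -> 0 < Psum n p ->
  (forall i, (1 <= i <= n)%N -> b i <= al + be * t i) ->
  (Psum n p)^-1 * \sum_(1 <= i < n.+1) p i * b i <= al + be * Mnp n p t.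
Proof.
move=> hp hP hb.
have S : \sum_(1 <= i < n.+1) p i * b i <= \sum_(1 <= i < n.+1) p i * (al + be * t i).
  apply: ler_sum_nat => i hi; apply: ler_wpM2l; [apply: hp | apply: hb]; lia.
have E : \sum_(1 <= i < n.+1) p i * (al + be * t i) =
   al * Psum n p + be * \sum_(1 <= i < n.+1) p i * t i.
  rewrite /Psum !mulr_sumr -big_split; apply: eq_bigr => i _ /=; ring.
rewrite E in S.
have hPi : 0 <= (Psum n p)^-1 by rewrite invr_ge0 ltW.
have := ler_wpM2l hPi S.
have -> : (Psum n p)^-1 * (al * Psum n p + be * \sum_(1 <= i < n.+1) p i * t i)
   = al + be * Mnp n p t.
  rewrite /Mnp; field; by rewrite gt_eqF.
by [].
Qed.
Lemma floor_facts (R : realFieldType) (n : nat) (t : nat -> R) q :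
  increasing_seq n t -> t 1%N <= q -> q < t n -> (1 <= n)%N ->
  let m := floor_idx n t q in
  [/\ (1 <= m)%N, (m < n)%N, t m <= q & q < t m.+1].
Proof.
move=> inc h1 hn n1 m.
have ub : forall i, (1 <= i <= n)%N -> t i <= q -> (i <= m)%N.
  move=> i hi hti; rewrite /m /floor_idx.
  by apply: (leq_bigmax_seq (F := fun i => i)) => //; rewrite mem_index_iota; lia.
have pr : m = 0%N \/ ((1 <= m <= n)%N /\ t m <= q).
  rewrite /m /floor_idx big_seq_cond.
  apply: (big_ind (fun x => x = 0%N \/ ((1 <= x <= n)%N /\ t x <= q))); first by left.
    by move=> x y hx hy; case: (leqP x y).
  move=> i /andP[]; rewrite mem_index_iota => hi hti; right; split => //; lia.
have m1 : (1 <= m)%N by apply: ub h1; lia.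
case: pr => [m0|[hm htm]]; first by move: m1; rewrite m0.
have mn : (m < n)%N.
  rewrite ltn_neqAle; apply/andP; split; last by lia.
  apply/eqP => e; move: htm; rewrite e => htm; move: (lt_le_trans hn htm); by rewrite ltxx.
split => //.
rewrite ltNge; apply/negP => hh.
have := ub m.+1 ltac:(lia) hh; lia.
Qed.
Lemma t_mono (R : realFieldType) (n : nat) (t : nat -> R) j :
  increasing_seq n t -> (1 <= j)%N -> forall i, (j <= i <= n)%N -> t j <= t i.
Proof.
move=> inc j1 i hi.
have := lemB (b := t) (d := 0) inc j1 (i := i) hi.
rewrite mul0r subr_ge0; apply => k hk.
have h : 0 < Delta t k by rewrite /Delta subr_gt0; apply: inc; lia.
by rewrite /slope divff ?gt_eqF.
Qed.

Theorem theorem4p3 (R : realFieldType) (I : interval R) (psi : R -> R)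
  (n : nat) (a t p : nat -> R) :
  nondecr_on I psi -> convex_on I psi ->
  (2 <= n)%N ->
  (forall i, (1 <= i <= n)%N -> a i \in I) ->
  relative_convex n a ->
  in_T n a t ->
  (forall i, (1 <= i <= n)%N -> 0 <= p i) ->
  0 < Psum n p ->
  Mnp n p t < t n ->
  let m := floor_idx n t (Mnp n p t) in
  let gamma := (Mnp n p t - t m) / (t m.+1 - t m) in
  let lambda := (t n - Mnp n p t) / (t n - t 1%N) in
  gamma * psi (a m.+1) + (1 - gamma) * psi (a m)
    <= (Psum n p)^-1 * \sum_(1 <= i < n.+1) p i * psi (a i)
  /\ (Psum n p)^-1 * \sum_(1 <= i < n.+1) p i * psi (a i)
    <= lambda * psi (a 1%N) + (1 - lambda) * psi (a n).
Proof.
move=> hnd hcv n2 hI _ hT hp hP hMn m gamma lambda.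
have inc := hT.1.
set b := fun i => psi (a i).
have hloc := b_local hnd hcv hI hT.
have hmono := slope_mono hloc.
set M := Mnp n p t.
have hM1 : t 1%N <= M.
  have S : \sum_(1 <= i < n.+1) p i * t 1%N <= \sum_(1 <= i < n.+1) p i * t i.
    apply: ler_sum_nat => i hi; apply: ler_wpM2l; [apply: hp; lia | apply: (t_mono inc (isT : (1 <= 1)%N)); lia].
  rewrite -mulr_suml in S.
  have hPi : 0 <= (Psum n p)^-1 by rewrite invr_ge0 ltW.
  have := ler_wpM2l hPi S.
  by rewrite mulrA mulVf ?gt_eqF // mul1r.
have [m1 mn htm hmt] := floor_facts inc hM1 hMn ltac:(lia).
rewrite -/M -/m in m1 mn htm hmt.
split.
- set d := slope b t m.
  have sup := support (b := b) (d := d) (i := m) inc ltac:(lia)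
    (fun k k1 kn km => hmono k m k1 ltac:(lia) mn)
    (fun k k1 kn km => hmono m k m1 km kn).
  have hsup : forall i, (1 <= i <= n)%N -> (b m - d * t m) + d * t i <= b i.
    by move=> i hi; have := sup i hi; lra.
  have := avg_lb hp hP hsup; rewrite -/M.
  have -> : b m - d * t m + d * M = gamma * psi (a m.+1) + (1 - gamma) * psi (a m).
    rewrite /d /slope /Delta /b /gamma /M; field.
    by rewrite subr_eq0 gt_eqF //; apply: inc.
  by [].
- have htn : 0 < t n - t 1%N.
    rewrite subr_gt0; apply: (lt_le_trans (inc 1%N isT ltac:(lia))).
    apply: (t_mono inc (j := 2%N)) => //; lia.
  set be := (b n - b 1%N) / (t n - t 1%N).
  have hbe : be * (t n - t 1%N) = b n - b 1%N by rewrite /be divfK // gt_eqF.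
  have hsup : forall j, (1 <= j <= n)%N -> b j <= (b 1%N - be * t 1%N) + be * t j.
    move=> j hj.
    have sup := support (b:=b) (d := slope b t (maxn 1 j.-1)) (i:=j) inc hj
      (fun k k1 kn kj => hmono k (maxn 1 j.-1) k1 ltac:(lia) ltac:(lia))
      (fun k k1 kn jk => hmono (maxn 1 j.-1) k ltac:(lia) ltac:(lia) kn).
    have s1 := sup 1%N ltac:(lia).
    have sn := sup n ltac:(lia).
    have tj1 : t 1%N <= t j by apply: (t_mono inc (isT : (1 <= 1)%N)); lia.
    have tjn : t j <= t n by apply: (t_mono inc); lia.
    have key : (b j - b 1%N) * (t n - t 1%N) <= (b n - b 1%N) * (t j - t 1%N).
      set dd := slope b t (maxn 1 j.-1) in s1 sn.
      nra.
    nra.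
  have := avg_ub hp hP hsup; rewrite -/M.
  have -> : b 1%N - be * t 1%N + be * M = lambda * psi (a 1%N) + (1 - lambda) * psi (a n).
    rewrite /be /b /lambda /M; field.
    by rewrite gt_eqF.
  by [].
Qed.
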